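(* Let $\Gamma$ be a finite connected graph and $f_1$ an eigenfunction of its normalized Laplacian for the eigenvalue $1$. Partition the vertex set of $\Gamma$ into sets $\Sigma_0,\Sigma_1,\Sigma_2$ such that no edge of $\Gamma$ joins a vertex of $\Sigma_1$ to a vertex of $\Sigma_2$. Assign each edge of $\Gamma$ with both endpoints in $\Sigma_0$ to exactly one of two classes $E_1,E_2$. Let $\Gamma_1$ be the graph with vertex set $\Sigma_1\cup\Sigma_0$ whose edges are the edges of $\Gamma$ with at least one endpoint in $\Sigma_1$ and both endpoints in $\Sigma_1\cup\Sigma_0$, together with $E_1$; let $\Gamma_2$ be a disjoint graph with vertex set a copy of $\Sigma_2\cup\Sigma_0$ whose edges are the (copies of) edges of $\Gamma$ with at least one endpoint in $\Sigma_2$ and both endpoints in $\Sigma_2\cup\Sigma_0$, together with (copies of) $E_2$. Form $\Gamma_0$ from the disjoint union of $\Gamma_1$ and $\Gamma_2$ by adding, for each $q\in\Sigma_0$, a new vertex $w_q$ joined by edges to the copy of $q$ in $\Gamma_1$ and to the copy of $q$ in $\Gamma_2$. Then $1$ is an eigenvalue of the normalized Laplacian of $\Gamma_0$, with an eigenfunction that agrees with $f_1$ on $\Gamma_1$.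
   Context: For a finite simple graph without isolated vertices, write $i\sim j$ for adjacency and $n_i$ for the degree of $i$. The normalized Laplacian acts on real functions $v$ on the vertices by $\Delta v(i)=v(i)-\frac{1}{n_i}\sum_{j\sim i}v(j)$; $\lambda$ is an eigenvalue with eigenfunction $u$ if $u\not\equiv 0$ and $\frac{1}{n_i}\sum_{j\sim i}u(j)=(1-\lambda)u(i)$ for all $i$. For $\lambda=1$ this says $\sum_{j\sim i}u(j)=0$ for all $i$. *)

(* Defs.v *)
From mathcomp Require Import all_boot all_order all_algebra.
Set Implicit Arguments. Unset Strict Implicit. Unset Printing Implicit Defensive.
Import Order.TTheory GRing.Theory Num.Theory.
Local Open Scope ring_scope.

Definition simple_graph (V : finType) (adj : rel V) : Prop :=
  symmetric adj /\ irreflexive adj.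

Definition no_isolated (V : finType) (adj : rel V) : Prop :=
  forall i, exists j, adj i j.

Definition connected_graph (V : finType) (adj : rel V) : Prop :=
  forall x y, connect adj x y.

Definition deg (V : finType) (adj : rel V) (i : V) : nat := #|[pred j | adj i j]|.

Definition nlap_eigenfun (R : realFieldType) (V : finType) (adj : rel V)
    (lam : R) (u : V -> R) : Prop :=
  (exists i, u i != 0) /\
  forall i, ((deg adj i)%:R)^-1 * (\sum_(j | adj i j) u j) = (1 - lam) * u i.

Definition V1 (T : finType) (S0 S1 : {set T}) := {x : T | x \in S1 :|: S0}.
Definition V2 (T : finType) (S0 S2 : {set T}) := {x : T | x \in S2 :|: S0}.
Definition W0 (T : finType) (S0 : {set T}) := {x : T | x \in S0}.

(* Vertex set of Gamma_0: copy of Sigma_1 u Sigma_0 (Gamma_1), copy of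
   Sigma_2 u Sigma_0 (Gamma_2), and the new vertices w_q, q in Sigma_0. *)
Definition V0 (T : finType) (S0 S1 S2 : {set T}) : finType :=
  ((V1 S0 S1 + V2 S0 S2) + W0 S0)%type.

(* E1 : the class-1 edges among the edges inside Sigma_0; the remaining
   edges inside Sigma_0 form E2. *)
Definition adj0 (T : finType) (e : rel T) (S0 S1 S2 : {set T}) (E1 : rel T)
    (x y : V0 S0 S1 S2) : bool :=
  match x, y with
  | inl (inl a), inl (inl b) =>
      e (val a) (val b) && [|| val a \in S1, val b \in S1 | E1 (val a) (val b)]
  | inl (inr a), inl (inr b) =>
      e (val a) (val b) &&
      [|| val a \in S2, val b \in S2 |
          [&& val a \in S0, val b \in S0 & ~~ E1 (val a) (val b)]]
  | inl (inl a), inr q => val a == val q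
  | inr q, inl (inl a) => val a == val q
  | inl (inr a), inr q => val a == val q
  | inr q, inl (inr a) => val a == val q
  | _, _ => false
  end.

(* Main.v *)
Require Import Defs.
From mathcomp Require Import all_boot all_order all_algebra.
Import Order.TTheory GRing.Theory Num.Theory.
Local Open Scope ring_scope.

Lemma sum_sig (R : realFieldType) (T : finType) (A : {set T}) (P : pred T) (F : T -> R) :
  \sum_(a : {x : T | x \in A} | P (val a)) F (val a) = \sum_(x | (x \in A) && P x) F x.
Proof. by rewrite (big_sub_cond (mem A) P F). Qed.

Arguments sum_sig {R T}.

Definition gdef (R : realFieldType) (T : finType) (e : rel T) (f1 : T -> R)
  (S0 S1 S2 : {set T}) (E1 : rel T) (x : V0 S0 S1 S2) : R :=
  match x with
  | inl (inl a) => f1 (val a)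
  | inl (inr a) => - f1 (val a)
  | inr q => - \sum_(b | e (val q) b && ((b \in S1) || E1 (val q) b)) f1 b
  end.

Arguments gdef {R T}.

Theorem theorem5 (R : realFieldType) (T : finType) (e : rel T)
  (He : simple_graph e) (Hni : no_isolated e) (Hconn : connected_graph e)
  (f1 : T -> R) (Hf1 : nlap_eigenfun e 1 f1)
  (S0 S1 S2 : {set T})
  (Hcover : S0 :|: S1 :|: S2 = setT)
  (H01 : [disjoint S0 & S1]) (H02 : [disjoint S0 & S2]) (H12 : [disjoint S1 & S2])
  (Hno12 : forall x y, x \in S1 -> y \in S2 -> ~~ e x y)
  (E1 : rel T) (HE1sym : symmetric E1)
  (HE1 : forall x y, E1 x y -> [&& e x y, x \in S0 & y \in S0]) :
  exists g : V0 S0 S1 S2 -> R,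
    nlap_eigenfun (adj0 e E1) 1 g /\
    forall a : V1 S0 S1, g (inl (inl a)) = f1 (val a).
Proof.
have cov y : [|| y \in S0, y \in S1 | y \in S2].
  by have := in_setT y; rewrite -Hcover !inE orbA.
have d01 y : y \in S0 -> y \in S1 -> False.
  by move=> a b; move: (disjointFr H01 a); rewrite b.
have d02 y : y \in S0 -> y \in S2 -> False.
  by move=> a b; move: (disjointFr H02 a); rewrite b.
have d12 y : y \in S1 -> y \in S2 -> False.
  by move=> a b; move: (disjointFr H12 a); rewrite b.
have Hs i : \sum_(j | e i j) f1 j = 0.
  have [_ H] := Hf1; have := H i; rewrite subrr mul0r.
  have [j eij] := Hni i.
  have dpos : (deg e i != 0)%N.
    rewrite /deg -lt0n; apply/card_gt0P; by exists j.
  move/eqP; rewrite mulf_eq0 invr_eq0 pnatr_eq0 (negbTE dpos) /=.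
  by move/eqP.
exists (gdef e f1 S0 S1 S2 E1); split; last by [].
split.
  have [[i fi] _] := Hf1.
  have := cov i; case/orP=> [i0|].
    have i10 : i \in S1 :|: S0 by rewrite inE i0 orbT.
    by exists (inl (inl (exist _ i i10))).
  case/orP=> [i1|i2].
    have i10 : i \in S1 :|: S0 by rewrite inE i1.
    by exists (inl (inl (exist _ i i10))).
  have i20 : i \in S2 :|: S0 by rewrite inE i2.
  by exists (inl (inr (exist _ i i20))); rewrite /= oppr_eq0.
move=> x; rewrite subrr mul0r.
suff -> : \sum_(j | adj0 e E1 x j) gdef e f1 S0 S1 S2 E1 j = 0 by rewrite mulr0.
rewrite !big_sumType /=.
case: x => [[a|a]|q] /=.
- move: (svalP a); move: (sval a) => a0 Ha.
  rewrite big_pred0_eq addr0.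
  rewrite (sum_sig (S1:|:S0) (fun y => e a0 y && [|| a0 \in S1, y \in S1 | E1 a0 y]) f1).
  rewrite (sum_sig S0 (fun y => a0 == y)
     (fun y => - \sum_(b | e y b && ((b \in S1) || E1 y b)) f1 b)).
  have := Ha; rewrite inE; case/orP => Ha1'.
  + have Ha0 : (a0 \in S0) = false by apply/negP => /d01; apply; exact: Ha1'.
    rewrite [X in _ + X = _]big_pred0; last by move=> y /=; rewrite andbC; case: eqP => // <-; rewrite Ha0.
    rewrite addr0 -[RHS](Hs a0); apply: eq_bigl => y /=; rewrite Ha1' /= andbT inE.
    case eay: (e a0 y); rewrite ?andbF //.
    have := cov y; case/or3P => Hy; rewrite ?Hy ?orbT //; move: Hy.
    by move=> y2; have := Hno12 _ _ Ha1' y2; rewrite eay.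
  + have Ha1 : (a0 \in S1) = false by apply/negP => /(d01 _ Ha1').
    rewrite [X in _ + X = _](big_pred1 a0); last first.
      by move=> y /=; case: (y =P a0) => [->|/eqP ne]; rewrite ?eqxx ?Ha1' // eq_sym (negbTE ne) andbF.
    rewrite [X in X + _ = _](_ : _ = \sum_(b | e a0 b && ((b \in S1) || E1 a0 b)) f1 b) ?subrr //.
    apply: eq_bigl => y /=; rewrite Ha1 /= inE.
    case: (boolP (y \in S1)) => //= _; rewrite andbC; case E: (E1 a0 y) => //=.
    by move/and3P: (HE1 _ _ E) => [-> _ ->].
    by rewrite andbF.
- move: (svalP a); move: (sval a) => a0 Ha.
  rewrite big_pred0_eq add0r.
  rewrite (sum_sig (S2:|:S0) (fun y => e a0 y && [|| a0 \in S2, y \in S2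
             | [&& a0 \in S0, y \in S0 & ~~ E1 a0 y]]) (fun y => - f1 y)).
  rewrite (sum_sig S0 (fun y => a0 == y)
     (fun y => - \sum_(b | e y b && ((b \in S1) || E1 y b)) f1 b)).
  rewrite sumrN.
  have := Ha; rewrite inE; case/orP => Ha2'.
  + have Ha0 : (a0 \in S0) = false by apply/negP => /d02; apply; exact: Ha2'.
    rewrite [X in _ + X = _]big_pred0; last by move=> y /=; rewrite andbC; case: eqP => // <-; rewrite Ha0.
    rewrite addr0 -[RHS]oppr0 -[X in _ = - X](Hs a0); congr (- _); apply: eq_bigl => y /=; rewrite Ha2' /= andbT inE.
    case eay: (e a0 y); rewrite ?andbF //.
    have := cov y; case/or3P => Hy; rewrite ?Hy ?orbT //; move: Hy.
    by move=> y1; have := Hno12 _ _ y1 Ha2'; rewrite (fst He) eay.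
  + have Ha2 : (a0 \in S2) = false by apply/negP => /(d02 _ Ha2').
    rewrite [X in _ + X = _](big_pred1 a0); last first.
      by move=> y /=; case: (y =P a0) => [->|/eqP ne]; rewrite ?eqxx ?Ha2' // eq_sym (negbTE ne) andbF.
    have := Hs a0; rewrite (bigID (fun b => (b \in S1) || E1 a0 b)) /=.
    rewrite [X in _ + X = _ -> _](_ : _ = \sum_(i | (i \in S2 :|: S0) &&
      (e a0 i && [|| false, i \in S2 | [&& true, i \in S0 & ~~ E1 a0 i]])) f1 i).
      by rewrite Ha2 Ha2' /= => h; rewrite -opprD addrC h oppr0.
    apply: eq_bigl => y /=; rewrite inE.
    case eay: (e a0 y); rewrite ?andbF //=.
    have := cov y; case/or3P => Hy.
    * have Hy1 : (y \in S1) = false by apply/negP => /(d01 _ Hy).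
      have Hy2 : (y \in S2) = false by apply/negP => /(d02 _ Hy).
      by rewrite Hy Hy1 Hy2.
    * have Hy0 : (y \in S0) = false by apply/negP => /d01; apply.
      have Hy2 : (y \in S2) = false by apply/negP => /(d12 _ Hy).
      by rewrite Hy Hy0 Hy2.
    * have Hy0 : (y \in S0) = false by apply/negP => /d02; apply.
      have Hy1 : (y \in S1) = false by apply/negP => /d12; apply.
      case E: (E1 a0 y); last by rewrite Hy Hy1.
      by move/and3P: (HE1 _ _ E) => [_ _]; rewrite Hy0.
- move: (svalP q); move: (sval q) => q0 Hq.
  rewrite big_pred0_eq addr0.
  rewrite (sum_sig (S1:|:S0) (fun y => y == q0) f1).
  rewrite (sum_sig (S2:|:S0) (fun y => y == q0) (fun y => - f1 y)).
  rewrite (big_pred1 q0); last by move=> y /=; case: (y =P q0) => [->|/eqP ne]; rewrite ?eqxx ?andbF // inE Hq orbT.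
  rewrite (big_pred1 q0); last by move=> y /=; case: (y =P q0) => [->|/eqP ne]; rewrite ?eqxx ?andbF // inE Hq orbT.
  by rewrite subrr.
Qed.
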